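(* Let $A$ be a $C^*$-algebra, and let $0<r<\frac{1}{2}$, $\theta\in[0,\infty)$ be real numbers. Suppose $f:A\to A$ satisfies $$\Big\|\mu f\Big(\frac{x+y}{2}\Big)+\mu f\Big(\frac{x-y}{2}\Big)-f(\mu x)+f(a^2)-f(a)a-af(a)+f(w^* )-(f(w))^*\Big\|\le \theta(\|x\|^r\|y\|^r+\|a\|^{2r}+\|w\|^r)$$ for all $\mu\in\mathbb{T}$ and all $x,y,a,w\in A$. Then there exists a unique $*$-Jordan derivation $D:A\to A$ such that $$\|f(x)-D(x)\|\le \frac{3^r\theta}{2-2^r}\|x\|^{2r}$$ for all $x\in A$.
   Context: $\mathbb{T}=\{\mu\in\mathbb{C}:|\mu|=1\}$. A Jordan derivation on an algebra $A$ is a linear map $D:A\to A$ with $D(a^2)=D(a)a+aD(a)$ for all $a\in A$. On a $C^*$-algebra, a $*$-Jordan derivation is a Jordan derivation $D$ with $D(a^* )=(D(a))^*$ for all $a\in A$. *)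

(* Defs.v *)
From HB Require Import structures.
From mathcomp Require Import all_boot all_order all_algebra.
From mathcomp Require Import all_classical all_reals.
From mathcomp Require Import exp.
From mathcomp Require Import complex.
Set Implicit Arguments. Unset Strict Implicit. Unset Printing Implicit Defensive.
Import Order.TTheory GRing.Theory Num.Theory.
Local Open Scope ring_scope.

Definition cmod (R : realType) (z : R[i]) : R := Normc.normc z.
Definition cconj (R : realType) (z : R[i]) : R[i] := conjc z.

Record cstar_algebra (R : realType) (A : lmodType R[i]) := CStarAlgebra {
  cmul : A -> A -> A;
  cstar : A -> A;
  cnorm : A -> R;
  cmul_addl : forall x y z, cmul (x + y) z = cmul x z + cmul y z;
  cmul_addr : forall x y z, cmul x (y + z) = cmul x y + cmul x z;
  cmul_scalel : forall (c : R[i]) x y, cmul (c *: x) y = c *: cmul x y;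
  cmul_scaler : forall (c : R[i]) x y, cmul x (c *: y) = c *: cmul x y;
  cmulA : forall x y z, cmul x (cmul y z) = cmul (cmul x y) z;
  cnorm_ge0 : forall x, 0 <= cnorm x;
  cnorm_eq0 : forall x, cnorm x = 0 -> x = 0;
  cnorm_triangle : forall x y, cnorm (x + y) <= cnorm x + cnorm y;
  cnormZ : forall (c : R[i]) x, cnorm (c *: x) = cmod c * cnorm x;
  cnorm_submul : forall x y, cnorm (cmul x y) <= cnorm x * cnorm y;
  cnorm_complete : forall u : nat -> A,
    (forall e : R, 0 < e -> exists N : nat, forall m n : nat,
        (N <= m)%N -> (N <= n)%N -> cnorm (u m - u n) < e) ->
    exists l : A, forall e : R, 0 < e -> exists N : nat, forall n : nat,
        (N <= n)%N -> cnorm (u n - l) < e;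
  cstar_add : forall x y, cstar (x + y) = cstar x + cstar y;
  cstar_scale : forall (c : R[i]) x, cstar (c *: x) = cconj c *: cstar x;
  cstarK : forall x, cstar (cstar x) = x;
  cstar_mul : forall x y, cstar (cmul x y) = cmul (cstar y) (cstar x);
  cstar_identity : forall x, cnorm (cmul (cstar x) x) = cnorm x ^+ 2
}.

Definition clinear (R : realType) (A : lmodType R[i]) (D : A -> A) :=
  (forall x y, D (x + y) = D x + D y) /\ (forall (c : R[i]) x, D (c *: x) = c *: D x).

Definition jordan_derivation (R : realType) (A : lmodType R[i])
  (S : cstar_algebra A) (D : A -> A) :=
  clinear D /\
  forall a, D (cmul S a a) = cmul S (D a) a + cmul S a (D a).

Definition star_jordan_derivation (R : realType) (A : lmodType R[i])
  (S : cstar_algebra A) (D : A -> A) :=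
  jordan_derivation S D /\ forall a, D (cstar S a) = cstar S (D a).

(* Main.v *)
Require Import Defs.
From HB Require Import structures.
From mathcomp Require Import all_boot all_order all_algebra.
From mathcomp Require Import all_classical all_reals.
From mathcomp Require Import exp.
From mathcomp Require Import complex.
From mathcomp Require Import ring lra.
Import Order.TTheory GRing.Theory Num.Theory.
Local Open Scope ring_scope.
Section Aux.
Variable R : realType.

Lemma bern (d : R) n : 0 <= d -> 1 + d *+ n <= (1 + d) ^+ n.
Proof.
move=> d0; elim: n => [|n IH]; first by rewrite expr0 mulr0n addr0.
rewrite exprS mulrS.
have k0 : 0 <= d *+ n by rewrite mulrn_wge0.
move: IH k0; set k := d *+ n; set t := (1 + d) ^+ n => IH k0.
nra.
Qed.

Lemma geo_zero (u C a b : R) : 0 <= u -> 0 <= a -> a < b ->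
  (forall n, b ^+ n * u <= C * a ^+ n) -> u = 0.
Proof.
move=> u0 a0 ab H; apply/eqP; rewrite eq_le u0 andbT; apply/negP => /negP.
rewrite -ltNge => upos.
have b0 : 0 < b by apply: le_lt_trans ab.
have [a00|apos] := eqVneq a 0.
  have := H 1%N; rewrite expr1 a00 expr1 mulr0 => h.
  by have := mulr_gt0 b0 upos; rewrite ltNge h.
have apos' : 0 < a by rewrite lt_def apos a0.
set d := b / a - 1.
have d0 : 0 < d by rewrite subr_gt0 ltr_pdivlMr // mul1r.
have ba : b = a * (1 + d) by rewrite /d addrC subrK mulrC divfK.
pose n := Num.Def.archi_bound (C / (u * d)).
have hn := H n; rewrite ba exprMn -mulrA [C * _]mulrC ler_pM2l ?exprn_gt0 // in hn.
have := @bern d n (ltW d0) => hb.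
have hC : 0 <= C.
  apply: le_trans hn; apply: mulr_ge0 => //; apply: exprn_ge0; exact: addr_ge0 (ltW d0).
have := archi_boundP (divr_ge0 hC (ltW (mulr_gt0 upos d0))).
rewrite -/n ltr_pdivrMr ?mulr_gt0 // => hlt.
have : C < (1 + d) ^+ n * u.
  apply: (lt_le_trans hlt).
  move: hb; set t := (1 + d) ^+ n; set k := d *+ n => hb.
  have -> : (n%:R : R) * (u * d) = k * u by rewrite /k -mulr_natl; ring.
  nra.
by rewrite ltNge hn.
Qed.

Lemma powR2_lt2 (s : R) : s < 1 -> powR 2 s < 2.
Proof.
move=> s1; rewrite /powR ifF; last by apply/negbTE; rewrite pnatr_eq0.
have l2 : 0 < ln (2 : R) by apply: ln_gt0; rewrite ltr1n.
rewrite -[X in _ < X](@lnK R 2); last by rewrite posrE ltr0n.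
rewrite ltr_expR; nra.
Qed.

Lemma powR_scale (t s : R) n : 0 <= t ->
  powR ((2 ^ n)%N%:R * t) s = (powR 2 s) ^+ n * powR t s.
Proof.
move=> t0; rewrite powRM ?ler0n // natrX -powR_mulrn ?ler0n // powRAC powR_mulrn //.
exact: powR_ge0.
Qed.
End Aux.

Section Main.
Local Open Scope complex_scope.
Variables (R : realType) (A : lmodType R[i]) (S : cstar_algebra A).
Variables (r theta : R) (f : A -> A).
Hypotheses (r0 : 0 < r) (r12 : r < 2^-1) (th0 : 0 <= theta).
Hypothesis Hf : forall (mu : R[i]) (x y a w : A), cmod mu = 1 ->
     cnorm S (mu *: f ((2^-1 : R[i]) *: (x + y)) + mu *: f ((2^-1 : R[i]) *: (x - y))
              - f (mu *: x)
              + f (cmul S a a) - cmul S (f a) a - cmul S a (f a)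
              + f (cstar S w) - cstar S (f w))
     <= theta * (powR (cnorm S x) r * powR (cnorm S y) r
                 + powR (cnorm S a) (2 * r) + powR (cnorm S w) r).

Local Notation N := (cnorm S).
Local Notation h := (2^-1 : R[i]).

Lemma cmod1 : cmod (1 : R[i]) = 1.
Proof. exact: Normc.normc1. Qed.

Lemma cnorm0 : N 0 = 0.
Proof.
have := cnormZ S 0 0; rewrite scale0r => ->.
by rewrite /cmod Normc.normc0 mul0r.
Qed.

Lemma cnorm_le0 v : N v <= 0 -> v = 0.
Proof. by move=> h0; apply: (@cnorm_eq0 _ _ S); apply/eqP; rewrite eq_le h0 cnorm_ge0. Qed.

Lemma dbl0 (x : A) : x = x + x -> x = 0.
Proof. by move=> h0; apply: (addrI x); rewrite -h0 addr0. Qed.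
Lemma cmul0l x : cmul S 0 x = 0.
Proof. by apply: dbl0; rewrite -cmul_addl addr0. Qed.
Lemma cmul0r x : cmul S x 0 = 0.
Proof. by apply: dbl0; rewrite -cmul_addr addr0. Qed.
Lemma cstar0 : cstar S 0 = 0.
Proof. by apply: dbl0; rewrite -cstar_add addr0. Qed.
Lemma cstarMn x n : cstar S (x *+ n) = cstar S x *+ n.
Proof. by elim: n => [|n IH]; rewrite ?mulr0n ?cstar0 // !mulrS cstar_add IH. Qed.

Lemma r2 : 2 * r != 0.
Proof. by rewrite mulf_neq0 // ?pnatr_eq0 // gt_eqF. Qed.

Lemma pw0 s : s != 0 -> powR (N 0) s = 0.
Proof. by move=> s0; rewrite cnorm0 powR0. Qed.

Definition E0 x y := f (h *: (x + y)) + f (h *: (x - y)) - f x.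
Definition J a := f (cmul S a a) - cmul S (f a) a - cmul S a (f a).
Definition K w := f (cstar S w) - cstar S (f w).

Lemma Hf1 x y a w : N (E0 x y + J a + K w) <= theta * (powR (N x) r * powR (N y) r
                 + powR (N a) (2 * r) + powR (N w) r).
Proof.
have := @Hf 1 x y a w cmod1; rewrite !scale1r /E0 /J /K.
by rewrite !addrA.
Qed.

Lemma mulSn_eq0 (x : A) n : x *+ n.+1 = 0 -> x = 0.
Proof.
move=> h0; rewrite -[x]scale1r -(@mulVf _ (n.+1%:R : R[i])) ?pnatr_eq0 //.
by rewrite -scalerA scaler_nat h0 scaler0.
Qed.

Lemma f0 : f 0 = 0.
Proof.
have := Hf1 0 0 0 0.
rewrite !pw0 ?r2 ?gt_eqF // !mulr0 !addr0 mulr0 => /cnorm_le0.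

rewrite /E0 /J /K !addr0 !subr0 !scaler0 addrK !cmul0l !cmul0r cstar0 !subr0 => H.
have H1 : cstar S (f 0) = f 0 *+ 3.

  move/eqP: H; rewrite addrA subr_eq0 => /eqP <-.
  by rewrite !mulrS mulr0n addr0 addrA.
have : f 0 = f 0 *+ 9 by rewrite -{1}(cstarK S (f 0)) H1 cstarMn H1 -mulrnA.
move/eqP; rewrite eq_sym -subr_eq0 -[X in _ - X]mulr1n -mulrnBr // => /eqP.
exact: mulSn_eq0.
Qed.

Lemma fmu_half mu x : cmod mu = 1 -> f (mu *: x) = mu *: (f (h *: x) + f (h *: x)).
Proof.
move=> hmu; have := @Hf mu x 0 0 0 hmu.
rewrite !pw0 ?r2 ?gt_eqF // !mulr0 !addr0 mulr0 => /cnorm_le0.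

rewrite subr0 !cmul0l cstar0 f0 !cmul0r !subr0 !addr0 => /eqP.

by rewrite cstar0 subr0 subr_eq0 scalerDr => /eqP ->.
Qed.

Lemma h2 : h * 2 = 1.
Proof. by rewrite mulVf // pnatr_eq0. Qed.

Lemma f2 z : f (2 *: z) = 2 *: f z.
Proof.
rewrite -{1}[2 *: z]scale1r (@fmu_half 1 (2 *: z) cmod1) scale1r scalerA h2 scale1r.
by rewrite scaler_nat mulr2n.
Qed.

Lemma fmu mu x : cmod mu = 1 -> f (mu *: x) = mu *: f x.
Proof.
move=> hmu; rewrite (@fmu_half mu x hmu); congr (_ *: _).
by rewrite -{3}[x]scale1r (@fmu_half 1 x cmod1) scale1r.
Qed.

Definition sc n : R[i] := (2 ^ n)%N%:R.

Lemma scS n : sc n.+1 = 2 * sc n.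
Proof. by rewrite /sc expnS natrM. Qed.

Lemma fs n z : f (sc n *: z) = sc n *: f z.
Proof.
elim: n z => [|n IH] z; first by rewrite /sc expn0 !scale1r.
by rewrite scS -scalerA f2 IH scalerA.
Qed.

Lemma cmod_sc n : cmod (sc n) = (2 ^ n)%N%:R.
Proof. by rewrite /cmod /sc (@normcMn R 1) Normc.normc1. Qed.

Lemma N_sc n v : N (sc n *: v) = (2 ^ n)%N%:R * N v.
Proof. by rewrite cnormZ cmod_sc. Qed.

Lemma J0 : J 0 = 0.
Proof. by rewrite /J !cmul0l f0 !cmul0r !subr0. Qed.
Lemma K0 : K 0 = 0.
Proof. by rewrite /K cstar0 f0 cstar0 subrr. Qed.

Lemma rr1 : r + r < 1.
Proof.
have := ltr_pM2r (ltr0n R 2) r (2^-1); move: r12; lra.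
Qed.

Lemma pp_lt2 : powR 2 r * powR 2 r < 2.
Proof.
rewrite -powRD; last by rewrite pnatr_eq0 implybT.
exact: powR2_lt2 rr1.
Qed.
Lemma p_lt2 : powR 2 r < 2.
Proof. by apply: powR2_lt2; have := rr1; lra. Qed.
Lemma q_lt2 : powR 2 (2 * r) < 2.
Proof. by apply: powR2_lt2; have := rr1; lra. Qed.

Lemma E0s n x y : E0 (sc n *: x) (sc n *: y) = sc n *: E0 x y.
Proof.
rewrite /E0 -scalerDr -scalerBr !scalerA !(mulrC h) -!scalerA !fs.
by rewrite [RHS]scalerBr [sc n *: (_ + _)]scalerDr.
Qed.

Lemma E0_zero x y : E0 x y = 0.
Proof.
apply: cnorm_le0; rewrite le_eqVlt; apply/orP; left; apply/eqP.
apply: (@geo_zero R (N (E0 x y)) (theta * (powR (N x) r * powR (N y) r))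
   (powR 2 r * powR 2 r) 2); first exact: cnorm_ge0.
- by apply: mulr_ge0; apply: powR_ge0.
- exact: pp_lt2.
move=> n; have := Hf1 (sc n *: x) (sc n *: y) 0 0.
rewrite E0s J0 K0 !addr0 !N_sc !powR_scale ?cnorm_ge0 // !pw0 ?r2 ?gt_eqF // !addr0.
rewrite -natrX => H; apply: le_trans H _; rewrite exprMn. rewrite le_eqVlt; apply/orP; left; apply/eqP; ring.
Qed.

Lemma h2s (u : A) : h *: (u + u) = u.
Proof. by rewrite -[u + u]mulr2n -[u *+ 2]scaler_nat scalerA h2 scale1r. Qed.

Lemma fadd u v : f (u + v) = f u + f v.
Proof.
have := E0_zero (u + v) (u - v); rewrite /E0.
have -> : u + v + (u - v) = u + u by rewrite addrACA subrr addr0.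
have -> : u + v - (u - v) = v + v by rewrite opprB addrC addrA addrNK.
by rewrite !h2s => /eqP; rewrite subr_eq0 => /eqP.
Qed.

Lemma fN u : f (- u) = - f u.
Proof. by apply/eqP; rewrite -addr_eq0 -fadd addNr f0. Qed.

Lemma fMn u n : f (u *+ n) = f u *+ n.
Proof. by elim: n => [|n IH]; rewrite ?mulr0n ?f0 // !mulrS fadd IH. Qed.

Lemma Js n a : J (sc n *: a) = sc n *: (sc n *: J a).
Proof.
rewrite /J !fs !cmul_scalel !cmul_scaler !fs.
by rewrite !scalerBr.
Qed.

Lemma J_zero a : J a = 0.
Proof.
apply: cnorm_le0; rewrite le_eqVlt; apply/orP; left; apply/eqP.
apply: (@geo_zero R (N (J a)) (theta * powR (N a) (2 * r))
   (powR 2 (2 * r)) (2 * 2)); first exact: cnorm_ge0.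
- exact: powR_ge0.
- by apply: lt_trans q_lt2 _; rewrite -{1}[2 : R]mulr1 ltr_pM2l // ltr1n.
move=> n; have := Hf1 0 0 (sc n *: a) 0.
rewrite E0_zero Js K0 add0r addr0 !N_sc !powR_scale ?cnorm_ge0 // !pw0 ?r2 ?gt_eqF // mul0r add0r addr0.
rewrite exprMn !natrX => H; apply: le_trans _ (le_trans H _); first by rewrite mulrA. rewrite le_eqVlt; apply/orP; left; apply/eqP; ring.
Qed.

Lemma Ks n w : K (sc n *: w) = sc n *: K w.
Proof.
by rewrite /K cstar_scale fs cstar_scale /cconj conjc_nat fs -scalerBr.
Qed.

Lemma K_zero w : K w = 0.
Proof.
apply: cnorm_le0; rewrite le_eqVlt; apply/orP; left; apply/eqP.
apply: (@geo_zero R (N (K w)) (theta * powR (N w) r)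
   (powR 2 r) 2); first exact: cnorm_ge0.
- exact: powR_ge0.
- exact: p_lt2.
move=> n; have := Hf1 0 0 0 (sc n *: w).
rewrite E0_zero Ks J0 !add0r !N_sc !powR_scale ?cnorm_ge0 // !pw0 ?r2 ?gt_eqF // mul0r !add0r.
rewrite -natrX => H; apply: le_trans H _; rewrite le_eqVlt; apply/orP; left; apply/eqP; ring.
Qed.

Lemma mul2_inj (u v : A) : u *+ 2 = v *+ 2 -> u = v.
Proof.
move=> e; apply/eqP; rewrite -subr_eq0; apply/eqP; apply: (@mulSn_eq0 _ 1).
by rewrite mulrnBl e subrr.
Qed.

Lemma freal1 (t : R) x : `|t| <= 1 -> f (t%:C *: x) = t%:C *: f x.
Proof.
move=> t1.
have t2 : 0 <= 1 - t ^+ 2.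
  rewrite subr_ge0 -real_normK ?num_real // expr_le1 //.
set s := Num.sqrt (1 - t ^+ 2).
have hmu : forall s', s' ^+ 2 = s ^+ 2 -> cmod (Complex t s') = 1.
  move=> s' e; rewrite /cmod /= e sqr_sqrtr // addrC subrK sqrtr1 //.
have e1 : cmod (Complex t s) = 1 by apply: hmu.
have e2 : cmod (Complex t (- s)) = 1 by apply: hmu; rewrite sqrrN.
have ee : Complex t s + Complex t (- s) = t%:C + t%:C.
  by apply/eqP; rewrite eq_complex /= subrr addr0 !eqxx.
have := congr1 f (scalerDl x (Complex t s) (Complex t (- s))).
rewrite fadd (@fmu _ x e1) (@fmu _ x e2) -scalerDl ee !scalerDl fadd => e.
by apply: mul2_inj; rewrite !mulr2n.
Qed.

Lemma freal (t : R) x : f (t%:C *: x) = t%:C *: f x.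
Proof.
pose n := (Num.Def.archi_bound `|t|).+1.
have hb := archi_boundP (normr_ge0 t).
have n0 : (0 : R) < n%:R by rewrite ltr0n.
have hn : `|t / n%:R| <= 1.
  rewrite normrM normfV normr_nat ler_pdivrMr // mul1r.
  by apply: ltW; apply: lt_le_trans hb _; rewrite ler_nat.
have e : t%:C = (n%:R : R[i]) * (t / n%:R)%:C.
  by rewrite -(rmorph_nat (real_complex R)) -rmorphM mulrC divfK // gt_eqF.
by rewrite e -!scalerA !scaler_nat fMn freal1.
Qed.

Lemma cmodi : cmod ('i : R[i]) = 1.
Proof. by rewrite /cmod /= expr0n /= add0r expr1n sqrtr1. Qed.

Lemma flin (c : R[i]) x : f (c *: x) = c *: f x.
Proof.
rewrite {1 2}(complexE c) !scalerDl fadd freal -!scalerA (@fmu _ _ cmodi) freal //.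
Qed.

Local Close Scope complex_scope.
Lemma final : exists D : A -> A,
    (star_jordan_derivation S D /\
     forall x : A, cnorm S (f x - D x) <= powR 3 r * theta / (2 - powR 2 r) * powR (cnorm S x) (2 * r))
    /\ (forall D' : A -> A,
          star_jordan_derivation S D' /\
          (forall x : A, cnorm S (f x - D' x) <= powR 3 r * theta / (2 - powR 2 r) * powR (cnorm S x) (2 * r))
          -> D' = D).
Proof.
have p2 : 0 <= 2 - powR 2 r by rewrite subr_ge0 ltW // p_lt2.
exists f; split; first split.
- split; first split.
  + split; [exact: fadd | exact: flin].
  + move=> a; apply/eqP; rewrite -subr_eq0 opprD addrA; apply/eqP; exact: J_zero.
  + move=> a; apply/eqP; rewrite -subr_eq0; apply/eqP; exact: K_zero.
- move=> x; rewrite subrr cnorm0; apply: mulr_ge0; last exact: powR_ge0.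
  by apply: divr_ge0 => //; apply: mulr_ge0 => //; exact: powR_ge0.
move=> D' [[[[Dadd Dsc] _] _] Db]; apply: funext => x.
set C := powR 3 r * theta / (2 - powR 2 r).
have : N (f x - D' x) = 0.
  apply: (@geo_zero R _ (C * powR (N x) (2 * r)) (powR 2 (2 * r)) 2); first exact: cnorm_ge0.
  - exact: powR_ge0.
  - exact: q_lt2.
  move=> n; have := Db (sc n *: x).
  rewrite flin Dsc -scalerBr !N_sc powR_scale ?cnorm_ge0 // natrX => H.
  apply: le_trans H _; rewrite /C le_eqVlt; apply/orP; left; apply/eqP; ring.
move/cnorm_eq0/eqP; rewrite subr_eq0 => /eqP ->. by [].
Qed.
End Main.

Theorem corollary2p10 (R : realType) (A : lmodType R[i]) (S : cstar_algebra A)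
  (r theta : R) (f : A -> A) :
  0 < r -> r < 2^-1 -> 0 <= theta ->
  (forall (mu : R[i]) (x y a w : A), cmod mu = 1 ->
     cnorm S (mu *: f ((2^-1 : R[i]) *: (x + y)) + mu *: f ((2^-1 : R[i]) *: (x - y))
              - f (mu *: x)
              + f (cmul S a a) - cmul S (f a) a - cmul S a (f a)
              + f (cstar S w) - cstar S (f w))
     <= theta * (powR (cnorm S x) r * powR (cnorm S y) r
                 + powR (cnorm S a) (2 * r) + powR (cnorm S w) r)) ->
  exists D : A -> A,
    (star_jordan_derivation S D /\
     forall x : A, cnorm S (f x - D x) <= powR 3 r * theta / (2 - powR 2 r) * powR (cnorm S x) (2 * r))
    /\ (forall D' : A -> A,
          star_jordan_derivation S D' /\
          (forall x : A, cnorm S (f x - D' x) <= powR 3 r * theta / (2 - powR 2 r) * powR (cnorm S x) (2 * r))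
          -> D' = D).
Proof. move=> r0 r12 th0 Hf; exact: final r0 r12 th0 Hf. Qed.
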